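(* Let $p=p(n)$ and $G\in\mathcal G(n,p)$. If $p=o(n^{-5/4})$, then with high probability $G$ is reconstructible from its $2$-neighbourhoods.
   Context: $\mathcal G(n,p)$ is the Erdős–Rényi random graph on vertex set $[n]$ in which each pair is an edge independently with probability $p$. ''With high probability'' means with probability tending to $1$ as $n\to\infty$. For a graph $G$, a vertex $v$ and an integer $r\ge1$, the $r$-neighbourhood $N_r^{(G)}(v)$ is the subgraph of $G$ induced by the vertices at distance at most $r$ from $v$, considered as a graph rooted at $v$. Graphs $G$ and $H$ have isomorphic $r$-neighbourhoods if there is a bijection $\phi:V(G)\to V(H)$ such that for every $v\in V(G)$ there is a graph isomorphism $N_r^{(G)}(v)\to N_r^{(H)}(\phi(v))$ mapping $v$ to $\phi(v)$. $G$ is reconstructible from its $r$-neighbourhoods if every graph $H$ with $r$-neighbourhoods isomorphic to those of $G$ is isomorphic to $G$. *)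

(* Defs.v *)
From HB Require Import structures.
From mathcomp Require Import all_boot all_order all_algebra.
From mathcomp Require Import all_classical all_reals all_analysis.
Set Implicit Arguments. Unset Strict Implicit. Unset Printing Implicit Defensive.
Import Order.TTheory GRing.Theory Num.Theory.

Definition simple_graph (T : finType) (g : rel T) : Prop :=
  (forall x y, g x y = g y x) /\ (forall x, g x x = false).

Fixpoint within (T : finType) (g : rel T) (r : nat) (v x : T) : bool :=
  match r with
  | 0 => x == v
  | r'.+1 => within g r' v x || [exists y, within g r' v y && g y x]
  end.

Definition rooted_nbhd_iso (T T' : finType) (g : rel T) (h : rel T') (r : nat)
  (v : T) (w : T') : Prop :=
  exists f : T -> T',
    [/\ f v = w,
        {in within g r v, forall x, within h r w (f x)},
        {in within g r v &, injective f},
        {in within h r w, forall y, exists2 x, within g r v x & f x = y}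
      & {in within g r v &, forall x y, g x y = h (f x) (f y)}].

Definition iso_nbhds (T T' : finType) (g : rel T) (h : rel T') (r : nat) : Prop :=
  exists phi : T -> T', bijective phi /\
    forall v, rooted_nbhd_iso g h r v (phi v).

Definition graph_iso (T T' : finType) (g : rel T) (h : rel T') : Prop :=
  exists phi : T -> T', bijective phi /\ forall x y, g x y = h (phi x) (phi y).

Definition reconstructible (T : finType) (g : rel T) (r : nat) : Prop :=
  forall (T' : finType) (h : rel T'), simple_graph h ->
    iso_nbhds g h r -> graph_iso g h.

Definition pairs (n : nat) : {set 'I_n * 'I_n} := [set e : 'I_n * 'I_n | (e.1 < e.2)%N].

Definition graph_of (n : nat) (E : {set 'I_n * 'I_n}) : rel 'I_n :=
  fun x y => ((x, y) \in E) || ((y, x) \in E).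

Definition gnp_prob (R : pzRingType) (n : nat) (p : R) (P : rel 'I_n -> Prop) : R :=
  \sum_(E : {set 'I_n * 'I_n} | (E \subset pairs n) && `[< P (graph_of E) >])
     p ^+ #|E| * (1 - p) ^+ (#|pairs n| - #|E|).
Arguments gnp_prob {R} n p P.

(* Main.v *)
Require Import Defs.
From HB Require Import structures.
From mathcomp Require Import all_boot all_order all_algebra.
From mathcomp Require Import all_classical all_reals all_analysis.
Require Import Defs.
Set Implicit Arguments. Unset Strict Implicit. Unset Printing Implicit Defensive.

Section Comb.
Variables (T : finType) (g : rel T).

Lemma withinS r v x : within g r.+1 v x = within g r v x || [exists y, within g r v y && g y x].
Proof. by []. Qed.

Lemma within_mono r v x : within g r v x -> within g r.+1 v x.
Proof. by move=> H; rewrite withinS H. Qed.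

Lemma within_le r s v x : r <= s -> within g r v x -> within g s v x.
Proof.
move=> /subnK <-; elim: (s - r) => [|k IH] //= H.
by rewrite IH.
Qed.

Lemma within_self r v : within g r v v.
Proof. by elim: r => [|r IH] /=; rewrite ?eqxx ?IH. Qed.

Lemma within1P v x : reflect (x = v \/ g v x) (within g 1 v x).
Proof.
rewrite withinS /=; apply: (iffP orP) => [[/eqP->|/existsP[y /andP[/eqP-> H]]]|[->|H]].
- by left.
- by right.
- by left.
- by right; apply/existsP; exists v; rewrite eqxx.
Qed.

Lemma within2P v x : reflect (within g 1 v x \/ exists y, g v y /\ g y x) (within g 2 v x).
Proof.
rewrite withinS; apply: (iffP orP) => [[H|/existsP[y /andP[/within1P[->|H1] H2]]]|[H|[y [H1 H2]]]].
- by left.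
- by left; apply/within1P; right.
- by right; exists y.
- by left.
- by right; apply/existsP; exists y; rewrite H2 andbT; apply/within1P; right.
Qed.

End Comb.

Section Comb2.
Variables (T : finType) (g : rel T).
Hypothesis sg : simple_graph g.

Lemma gsym x y : g x y = g y x. Proof. by case: sg. Qed.
Lemma gneq x y : g x y -> x != y.
Proof. by case: sg => _ Hi H; apply/eqP => E; move: H; rewrite E Hi. Qed.

Definition closedS (S : pred T) := forall x y, S x -> g x y -> S y.

Lemma closed_within S r v x : closedS S -> S v -> within g r v x -> S x.
Proof.
move=> HS Hv; elim: r x => [|r IH] x /=; first by move/eqP->.
case/orP => [/IH //|/existsP[y /andP[/IH Hy Hyx]]]; exact: HS Hy Hyx.
Qed.

Lemma closed_within_rev S r v x : closedS S -> within g r v x -> S x -> S v.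
Proof.
move=> HS; elim: r x => [|r IH] x /=; first by move/eqP->.
case/orP => [/IH //|/existsP[y /andP[Hy Hyx]]] Hx; apply: (IH y Hy).
by apply: HS Hx _; rewrite gsym.
Qed.

Definition P5free := forall a b c d e, uniq [:: a; b; c; d; e] ->
  g a b -> g b c -> g c d -> g d e -> False.

Definition hub u := (forall x, within g 2 u x -> within g 1 u x) \/
  exists z1 z2, [/\ z1 != z2, g u z1 & g u z2].

Lemma hub_cb (P5 : P5free) u : hub u -> closedS (within g 2 u).
Proof.
move=> Hu x y Hx Hxy.
case: (boolP (within g 1 u x)) => H1x.
  apply/within2P; case/within1P: H1x => [E|Hux].
    by subst x; left; apply/within1P; right.
  by right; exists x.
have [y1 [Huy1 Hy1x]] : exists y1, g u y1 /\ g y1 x.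
  by case/within2P: Hx => [H|//]; rewrite H in H1x.
case: Hu => [Hb|[z1 [z2 [Hz Hz1 Hz2]]]].
  by move: (Hb x Hx); rewrite (negbTE H1x).
apply/negPn/negP => Hy; exfalso.
have [z [Huz Hzy1]] : exists z, g u z /\ z != y1.
  case: (eqVneq z1 y1) => [E|N]; last by exists z1.
  by exists z2; split => //; rewrite -E eq_sym.
have Hn2 : forall a, within g 2 u a -> a != y.
  by move=> a Ha; apply/eqP => E; rewrite -E Ha in Hy.
have Hn1 : forall a, within g 1 u a -> a != x.
  by move=> a Ha; apply/eqP => E; rewrite -E Ha in H1x.
have W1 : forall a, g u a -> within g 1 u a by move=> a Ha; apply/within1P; right.
have W12 : forall a, within g 1 u a -> within g 2 u a by move=> a; apply: within_mono.
have Wu : within g 1 u u := within_self g 1 u.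
apply: (P5 z u y1 x y) => //; last by rewrite gsym.
rewrite /= !inE !negb_or.
rewrite (Hn2 _ (W12 _ (W1 _ Huz))) (Hn2 _ (W12 _ Wu)) (Hn2 _ (W12 _ (W1 _ Huy1))) (gneq Hxy).
rewrite (Hn1 _ (W1 _ Huz)) (Hn1 _ Wu) (Hn1 _ (W1 _ Huy1)) Hzy1 (gneq Huy1).
by rewrite eq_sym (gneq Huz).
Qed.

Lemma hub_exists v : exists u, hub u /\ within g 2 u v.
Proof.
case: (boolP [forall x, within g 2 v x ==> within g 1 v x]) => H.
  exists v; split; last exact: within_self.
  by left => x Hx; exact: (implyP (forallP H x) Hx).
move/forallPn: H => [x]; rewrite negb_imply => /andP [H2 H1].
have [y1 [Hvy1 Hy1x]] : exists y1, g v y1 /\ g y1 x.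
  by case/within2P: H2 => [H|//]; rewrite H in H1.
exists y1; split.
  right; exists v, x; split => //; last by rewrite gsym.
  by apply/eqP => E; rewrite -E within_self in H1.
by apply: within_mono; apply/within1P; right; rewrite gsym.
Qed.

End Comb2.

Section Iso.

Lemma rni_inv (T T' : finType) (g : rel T) (h : rel T') r v w :
  rooted_nbhd_iso g h r v w -> rooted_nbhd_iso h g r w v.
Proof.
case=> f [fv fmap finj fsurj fedge].
pose finv y := if [pick x | within g r v x && (f x == y)] is Some x then x else v.
have Hfi : forall y, within h r w y -> within g r v (finv y) /\ f (finv y) = y.
  move=> y Hy; rewrite /finv; case: pickP => [x /andP[Hx /eqP Hfx] | Hn] //.
  by case: (fsurj y Hy) => x Hx Hfx; move: (Hn x); rewrite Hx Hfx eqxx.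
exists finv; split.
- have [H1 H2] := Hfi w (within_self h r w).
  by apply: finj => //; [exact: within_self | rewrite H2].
- by move=> y Hy; case: (Hfi y Hy).
- move=> y1 y2 Hy1 Hy2 E.
  by rewrite -(Hfi y1 Hy1).2 -(Hfi y2 Hy2).2 E.
- move=> x Hx; exists (f x); first exact: fmap.
  have [H1 H2] := Hfi (f x) (fmap x Hx).
  exact: finj.
- move=> y1 y2 Hy1 Hy2.
  have [H11 H12] := Hfi y1 Hy1; have [H21 H22] := Hfi y2 Hy2.
  by rewrite fedge // H12 H22.
Qed.

Lemma rni_comp (T T' T'' : finType) (g : rel T) (h : rel T') (k : rel T'') r v w x :
  rooted_nbhd_iso g h r v w -> rooted_nbhd_iso h k r w x -> rooted_nbhd_iso g k r v x.
Proof.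
case=> f [fv fmap finj fsurj fedge]; case=> f2 [fv2 fmap2 finj2 fsurj2 fedge2].
exists (f2 \o f); split => /=.
- by rewrite fv fv2.
- by move=> y Hy; apply: fmap2; apply: fmap.
- by move=> y1 y2 H1 H2 /finj2 E; apply: finj => //; apply: E; apply: fmap.
- move=> z Hz; case: (fsurj2 z Hz) => y Hy <-.
  by case: (fsurj y Hy) => x0 Hx0 <-; exists x0.
- by move=> y1 y2 H1 H2; rewrite fedge // fedge2 //; apply: fmap.
Qed.

Lemma rni_zigzag (T T' : finType) (g : rel T) (h : rel T') r v w v' w' :
  rooted_nbhd_iso g h r v w -> rooted_nbhd_iso g h r v' w ->
  rooted_nbhd_iso g h r v' w' -> rooted_nbhd_iso g h r v w'.
Proof.
move=> H1 H2 H3; apply: (rni_comp H1); apply: rni_comp (rni_inv H2) H3.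
Qed.

End Iso.

Section Transfer.
Variables (T T' : finType) (g : rel T) (h : rel T').
Hypotheses (sg : simple_graph g) (sh : simple_graph h).

Lemma hub_transfer u w : rooted_nbhd_iso g h 2 u w -> hub g u -> hub h w.
Proof.
case=> f [fv fmap finj fsurj fedge] [Hb|[z1 [z2 [Hz H1 H2]]]].
  left => y Hy; case: (fsurj y Hy) => x Hx <-.
  case/within1P: (Hb x Hx) => [->|Hux]; apply/within1P; first by left.
  by right; rewrite -fv -fedge //; apply: within_self.
have W : forall z, g u z -> within g 2 u z.
  by move=> z Hz'; apply: within_mono; apply/within1P; right.
have Wu := within_self g 2 u.
right; exists (f z1), (f z2); split.
- by apply/eqP => /finj E; move/eqP: Hz; apply; apply: E; apply: W.
- by rewrite -fv -fedge //; apply: W.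
- by rewrite -fv -fedge //; apply: W.
Qed.

Lemma P5_transfer : iso_nbhds g h 2 -> P5free g -> P5free h.
Proof.
case=> phi [[phinv _ Hc] Hphi] P5 a b c d e Hu Hab Hbc Hcd Hde.
have := Hphi (phinv c); rewrite Hc; case=> f [fv fmap finj fsurj fedge].
set v := phinv c in fv fmap finj fsurj fedge.
have W1 : forall y, h c y -> within h 2 c y.
  by move=> y Hy; apply: within_mono; apply/within1P; right.
have W2 : forall y z, h c y -> h y z -> within h 2 c z.
  by move=> y z Hy Hz; apply/within2P; right; exists y.
have Hc' := within_self h 2 c.
have Ha : within h 2 c a by apply: (W2 b); rewrite gsym.
have Hb : within h 2 c b by apply: W1; rewrite gsym.
have Hd := W1 _ Hcd.
have He := W2 _ _ Hcd Hde.
case: (fsurj a Ha) => a' Ha' Ea; case: (fsurj b Hb) => b' Hb' Eb.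
case: (fsurj c Hc') => c' Hc'' Ec; case: (fsurj d Hd) => d' Hd' Ed.
case: (fsurj e He) => e' He' Ee.
apply: (P5 a' b' c' d' e').
- by apply: (@map_uniq _ _ f); rewrite /= Ea Eb Ec Ed Ee.
- by rewrite fedge // Ea Eb.
- by rewrite fedge // Eb Ec.
- by rewrite fedge // Ec Ed.
- by rewrite fedge // Ed Ee.
Qed.

Lemma within_iso (S : pred T) (S' : pred T') (f : T -> T') :
  closedS g S -> closedS h S' -> {in S, forall x, S' (f x)} ->
  {in S &, injective f} -> {in S', forall y, exists2 x, S x & f x = y} ->
  {in S &, forall x y, g x y = h (f x) (f y)} ->
  forall r x a, S x -> S a -> within g r x a = within h r (f x) (f a).
Proof.
move=> HS HS' fmap finj fsurj fedge r x a Hx; elim: r a => [|r IH] a Ha /=.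
  apply/eqP/eqP => [->//|]; exact: finj.
rewrite IH //; congr (_ || _); apply/existsP/existsP => [[y /andP[Hy Hya]]|[y' /andP[Hy' Hya]]].
  have Sy : S y := closed_within HS Hx Hy.
  by exists (f y); rewrite -IH // Hy -fedge.
have Sy' : S' y'.
  by apply: (HS' (f a)); [exact: fmap | rewrite (gsym sh)].
case: (fsurj y' Sy') => y Sy Ey; subst y'.
by exists y; rewrite IH // Hy' fedge.
Qed.

Lemma rni_closed (S : pred T) (S' : pred T') (f : T -> T') :
  closedS g S -> closedS h S' -> {in S, forall x, S' (f x)} ->
  {in S &, injective f} -> {in S', forall y, exists2 x, S x & f x = y} ->
  {in S &, forall x y, g x y = h (f x) (f y)} ->
  forall r x, S x -> rooted_nbhd_iso g h r x (f x).
Proof.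
move=> HS HS' fmap finj fsurj fedge r x Hx.
have WI := within_iso HS HS' fmap finj fsurj fedge.
have Sin : forall a, within g r x a -> S a by move=> a; apply: closed_within HS Hx.
exists f; split => //.
- by move=> a Ha; rewrite -WI //; apply: Sin.
- by move=> a b Ha Hb; apply: finj; apply: Sin.
- move=> y Hy.
  have Sy : S' y := closed_within HS' (fmap x Hx) Hy.
  case: (fsurj y Sy) => a Sa Ea; exists a => //.
  by rewrite WI // Ea.
- by move=> a b Ha Hb; apply: fedge; apply: Sin.
Qed.

End Transfer.

Lemma swap_lemma (T T' : finType) (R : T -> T' -> Prop)
  (zz : forall v w v' w', R v w -> R v' w -> R v' w' -> R v w')
  (psi : T -> T') (bpsi : bijective psi) (HR : forall v, R v (psi v))
  (A : pred T) (f : T -> T') (finj : {in A &, injective f})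
  (fR : {in A, forall x, R x (f x)}) :
  exists psi', [/\ bijective psi', forall v, R v (psi' v) & {in A, forall x, psi' x = f x}].
Proof.
suff: forall s : seq T, {subset s <= A} ->
   exists psi', [/\ bijective psi', forall v, R v (psi' v) & {in s, forall x, psi' x = f x}].
  case/(_ (enum A)) => [x|psi' [H1 H2 H3]]; first by rewrite mem_enum.
  by exists psi'; split => // x Hx; apply: H3; rewrite mem_enum.
elim=> [|c s IH] Hsub; first by exists psi.
have Hs : {subset s <= A} by move=> x Hx; apply: Hsub; rewrite inE Hx orbT.
have Ac : c \in A by apply: Hsub; rewrite inE eqxx.
case: (IH Hs) => psi1 [b1 R1 E1].
case: (boolP (c \in s)) => Hcs.
  exists psi1; split => // x; rewrite inE => /orP[/eqP->|]; [exact: E1 | exact: E1].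
case: (b1) => inv K1 K2.
set c' := inv (f c).
pose sw x := if x == c then c' else if x == c' then c else x.
have swK : cancel sw sw.
  move=> x; rewrite /sw; case: (eqVneq x c) => [->|Hxc].
    by rewrite eqxx; case: (eqVneq c' c) => [->|_]; rewrite ?eqxx.
  case: (eqVneq x c') => [->|Hxc']; first by rewrite eqxx.
  by rewrite (negbTE Hxc) (negbTE Hxc').
have Epc : psi1 c' = f c by rewrite /c' K2.
exists (psi1 \o sw); split.
- by apply: bij_comp => //; exists sw.
- move=> v /=; rewrite /sw; case: (eqVneq v c) => [->|Hvc]; first by rewrite Epc; apply: fR.
  case: (eqVneq v c') => [->|Hvc']; last exact: R1.
  apply: (zz _ (f c) c); [by rewrite -Epc | exact: fR | exact: R1].
- move=> x; rewrite inE => /orP[/eqP->|Hx] /=; rewrite /sw.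
    by rewrite eqxx Epc.
  have Hxc : x != c by apply/eqP => E; rewrite -E Hx in Hcs.
  have Hxc' : x != c'.
    apply/eqP => E; have Ax : x \in A by apply: Hs.
    move/eqP: Hxc; apply; apply: (finj _ _ Ax Ac).
    by rewrite -E1 // E Epc.
  by rewrite (negbTE Hxc) (negbTE Hxc'); apply: E1.
Qed.

Theorem recon_P5 (T : finType) (g : rel T) :
  simple_graph g -> P5free g -> reconstructible g 2.
Proof.
move=> sg P5 T' h sh Hiso.
have P5h := P5_transfer sh Hiso P5.
case: Hiso => phi [bphi Hphi].
pose R := rooted_nbhd_iso g h 2.
have zz : forall v w v' w', R v w -> R v' w -> R v' w' -> R v w'.
  by move=> *; apply: rni_zigzag; eauto.
pose INV (P : {set T}) psi := [/\ bijective psi, forall v, R v (psi v),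
   closedS g (fun x => x \in P), closedS h (fun y => y \in [set psi x | x in P])
   & {in P &, forall x y, g x y = h (psi x) (psi y)}].
suff: forall k (P : {set T}) psi, #|~: P| <= k -> INV P psi -> graph_iso g h.
  move=> H; apply: (H #|~: finset.set0| finset.set0 phi (leqnn _)).
  split => //; [by move=> x y; rewrite inE | | by move=> x y; rewrite inE].
  by move=> x y; rewrite imset0 inE.
elim=> [|k IH] P psi Hk [bpsi HR clP clPh eP].
  have PT : P = [set: T].
    by apply/setP => x; rewrite inE; apply/negPn/negP => Hx; move: Hk; rewrite leqn0 cards_eq0 => /eqP/setP/(_ x); rewrite !inE Hx.
  by exists psi; split => // x y; apply: eP; rewrite PT finset.in_setT.
case: (pickP (fun v => v \notin P)) => [v Hv | Hn]; last first.
  have PT : P = [set: T] by apply/setP => x; rewrite inE; move: (Hn x) => /negbFE.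
  by exists psi; split => // x y; apply: eP; rewrite PT finset.in_setT.
case: (hub_exists sg v) => u [Hu Huv].
set w := psi u.
have HRu : R u w := HR u.
have cbu : closedS g (within g 2 u) := hub_cb sg P5 Hu.
have cbw : closedS h (within h 2 w) := hub_cb sh P5h (hub_transfer HRu Hu).
case: (HRu) => f [fv fmap finj fsurj fedge].
have DisjG : forall x, within g 2 u x -> x \notin P.
  move=> x Hx; apply/negP => Px.
  have Pu : u \in P := closed_within_rev sg clP Hx Px.
  by move: Hv; rewrite (closed_within clP Pu Huv).
have psiinj := bij_inj bpsi.
have DisjH : forall y, within h 2 w y -> y \notin [set psi x | x in P].
  move=> y Hy; apply/negP => Py.
  have := closed_within_rev sh clPh Hy Py; case/imsetP => x Px /psiinj Ex.
  by move: (DisjG u (within_self g 2 u)); rewrite Ex Px.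
pose A : {set T} := P :|: [set x | within g 2 u x].
pose f' x := if x \in P then psi x else f x.
have inA : forall x, x \in A -> x \notin P -> within g 2 u x.
  by move=> x; rewrite !inE => /orP[->|//].
have finj' : {in A &, injective f'}.
  move=> x y Ax Ay; rewrite /f'.
  case: (boolP (x \in P)) => Px; case: (boolP (y \in P)) => Py.
  - exact: psiinj.
  - move=> E; have := DisjH _ (fmap _ (inA _ Ay Py)).
    by rewrite -E (imset_f psi Px).
  - move=> E; have := DisjH _ (fmap _ (inA _ Ax Px)).
    by rewrite E (imset_f psi Py).
  - by apply: finj; apply: inA.
have fR : {in A, forall x, R x (f' x)}.
  move=> x Ax; rewrite /f'; case: (boolP (x \in P)) => Px; first exact: HR.
  by apply: (rni_closed sh cbu cbw fmap finj fsurj fedge); apply: inA.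
case: (swap_lemma zz bpsi HR finj' fR) => psi' [b' R' E'].
apply: (IH A psi').
  have: ~: A \proper ~: P.
    apply/properP; split; first by apply/fintype.subsetP => x; rewrite !inE negb_or => /andP[].
    by exists v; rewrite !inE ?Hv // Huv orbT.
  by move/proper_card => H; rewrite -ltnS (leq_trans H Hk).
have E'P : forall x, x \in P -> psi' x = psi x.
  by move=> x Px; rewrite E' ?/f' ?Px // inE Px.
have E'B : forall x, within g 2 u x -> psi' x = f x.
  move=> x Hx; have Px := DisjG x Hx.
  by rewrite E' ?/f' ?(negbTE Px) // !inE Hx orbT.
split => //.
- move=> x y; rewrite !inE => /orP[Px|Bx] Hxy.
    by rewrite (clP _ _ Px Hxy).
  by rewrite (cbu _ _ Bx Hxy) orbT.
- move=> y z /imsetP[x Ax ->] Hyz.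
  case: (boolP (x \in P)) => Px.
    move: Hyz; rewrite E'P // => Hyz.
    have := clPh _ _ (imset_f psi Px) Hyz; case/imsetP => x2 Px2 ->.
    by rewrite -E'P //; apply: imset_f; rewrite inE Px2.
  move: Hyz; rewrite E'B ?(inA _ Ax Px) // => Hyz.
  have := cbw _ _ (fmap _ (inA _ Ax Px)) Hyz => Hz.
  case: (fsurj z Hz) => x2 Hx2 <-.
  by rewrite -E'B //; apply: imset_f; rewrite !inE Hx2 orbT.
- have cross : forall x y, x \in P -> within g 2 u y -> g x y = h (psi x) (f y).
    move=> x y Px Hy.
    have Py := DisjG y Hy.
    have -> : g x y = false by apply/negP => Hxy; move: Py; rewrite (clP _ _ Px Hxy).
    apply/esym/negP => Hxy; move: (DisjH _ (fmap _ Hy)).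
    by rewrite (clPh _ _ (imset_f psi Px) Hxy).
  move=> x y Ax Ay.
  case: (boolP (x \in P)) => Px; case: (boolP (y \in P)) => Py.
  - by rewrite !E'P // eP.
  - by rewrite (E'P x Px) (E'B y (inA _ Ay Py)) cross // (inA _ Ay Py).
  - rewrite (E'P y Py) (E'B x (inA _ Ax Px)) (gsym sg) (gsym sh).
    by rewrite cross // (inA _ Ax Px).
  - by rewrite (E'B x (inA _ Ax Px)) (E'B y (inA _ Ay Py)) fedge //; apply: inA.
Qed.

Unset Implicit Arguments.
Import Order.TTheory GRing.Theory Num.Def Num.Theory.
Local Open Scope ring_scope.

Section Prob.
Variables (R : realType) (n : nat) (p : R).
Hypothesis hp : 0 <= p <= 1.

Let N := pairs n.
Let w (E : {set 'I_n * 'I_n}) : R := p ^+ #|E| * (1 - p) ^+ (#|N| - #|E|).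

Lemma sub_sum (S : {set 'I_n * 'I_n}) : S \subset N ->
  \sum_(E : {set 'I_n * 'I_n} | (E \subset N) && (S \subset E)) w E = p ^+ #|S|.
Proof.
move=> SN.
pose F i := if i \in N then p else 0.
pose G i := if i \in N then (if i \in S then 0 else 1 - p) else 1.
have key := bigA_distr 1 +%R F G.
have L : \prod_i (F i + G i) = p ^+ #|S|.
  rewrite -prodr_const [RHS]big_mkcond /=; apply: eq_bigr => i _.
  rewrite /F /G; case: (boolP (i \in S)) => HiS.
    by rewrite (fintype.subsetP SN i HiS) addr0.
  by case: (i \in N); rewrite ?subrKC ?add0r.
rewrite -L key big_mkcond /=; apply: eq_bigr => J _.
case: (boolP ((J \subset N) && (S \subset J))) => [/andP[JN SJ] | Hc].
  have fac : forall i, (if i \in J then F i else G i) =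
       (if i \in J then p else 1) * (if i \in N :\: J then 1 - p else 1).
    move=> i; rewrite /F /G finset.in_setD; case: (boolP (i \in J)) => HiJ /=.
      by rewrite (fintype.subsetP JN i HiJ) mulr1.
    have HiS : i \notin S by apply: contra HiJ; apply: (fintype.subsetP SJ).
    by rewrite (negbTE HiS) mul1r.
  rewrite /w; under eq_bigr => i _ do rewrite fac.
  rewrite big_split /= -!big_mkcond /= !prodr_const cardsD.
  by rewrite (finset.setIidPr JN).
case/nandP: Hc => /fintype.subsetPn [i Hi1 Hi2].
  by rewrite (bigD1 i) //= Hi1 /F (negbTE Hi2) mul0r.
rewrite (bigD1 i) //= (negbTE Hi2) /G (fintype.subsetP SN i Hi1) Hi1 mul0r.
done.
Qed.


Definition nrm (x y : 'I_n) : 'I_n * 'I_n := if (x < y)%N then (x, y) else (y, x).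

Lemma nrm_in x y : x != y -> nrm x y \in pairs n.
Proof.
rewrite /nrm /pairs inE => Hxy; case: ifP => //= H.
have Hv : nat_of_ord x != nat_of_ord y by [].
by rewrite ltn_neqAle leqNgt H andbT eq_sym.
Qed.

Lemma graph_edge (E : {set 'I_n * 'I_n}) x y : E \subset pairs n -> graph_of E x y -> nrm x y \in E.
Proof.
rewrite /graph_of /nrm => EN /orP[H|H].
  by have := fintype.subsetP EN _ H; rewrite inE /= => ->.
have := fintype.subsetP EN _ H; rewrite inE /= => Hyx.
by case: ifP => Hxy //; move: (ltn_trans Hxy Hyx); rewrite ltnn.
Qed.

Lemma nrm_eq x y z u : nrm x y = nrm z u -> (x = z /\ y = u) \/ (x = u /\ y = z).
Proof. by rewrite /nrm; do 2 case: ifP => _; case=> -> ->; auto. Qed.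

Lemma simple_graph_of (E : {set 'I_n * 'I_n}) : E \subset pairs n -> simple_graph (graph_of E).
Proof.
move=> EN; split => [x y|x]; first by rewrite /graph_of orbC.
rewrite /graph_of orbb; apply/negP => H.
by have := fintype.subsetP EN _ H; rewrite inE /= ltnn.
Qed.

Definition T5 := ('I_n * 'I_n * 'I_n * 'I_n * 'I_n)%type.
Definition ut (t : T5) : bool := let: (a, b, c, d, e) := t in uniq [:: a; b; c; d; e].
Definition St (t : T5) : {set 'I_n * 'I_n} :=
  let: (a, b, c, d, e) := t in [set x in [:: nrm a b; nrm b c; nrm c d; nrm d e]].

Lemma St_N t : ut t -> St t \subset pairs n.
Proof.
case: t => [[[[a b] c] d] e] /= Hu; apply/fintype.subsetP => x /[!inE] Hx.
move: Hu; rewrite /= !inE !negb_or => /andP[/and4P[Hab Hac Had Hae] /andP[/and3P[Hbc Hbd Hbe] /andP[/andP[Hcd Hce] /andP[Hde _]]]].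
by move: Hx; case/or4P => /eqP->; [move: (nrm_in _ _ Hab) | move: (nrm_in _ _ Hbc) | move: (nrm_in _ _ Hcd) | move: (nrm_in _ _ Hde)]; rewrite inE.
Qed.

Lemma St_card t : ut t -> #|St t| = 4%N.
Proof.
case: t => [[[[a b] c] d] e] /= Hu; rewrite cardsE; apply/card_uniqP.
move: Hu; rewrite /= !inE !negb_or => /andP[/and4P[Hab Hac Had Hae] /andP[/and3P[Hbc Hbd Hbe] /andP[/andP[Hcd Hce] /andP[Hde _]]]].
rewrite !andbT; apply/and3P; split; [apply/and3P; split| apply/andP; split|];
  apply/eqP => /nrm_eq [[E1 E2]|[E1 E2]];
  move: Hab Hac Had Hae Hbc Hbd Hbe Hcd Hce Hde; rewrite ?E1 ?E2 ?eqxx //.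
Qed.


Lemma good (E : {set 'I_n * 'I_n}) : E \subset pairs n ->
  ~~ [exists t, ut t && (St t \subset E)] -> P5free (graph_of E).
Proof.
move=> EN Hn a b c d e Hu Hab Hbc Hcd Hde.
apply: (negP Hn); apply/existsP; exists (a, b, c, d, e); apply/andP; split => //.
apply/fintype.subsetP => x /[!inE] /or4P[] /eqP->; exact: graph_edge.
Qed.

Lemma w_ge0 E : 0 <= w E.
Proof.
case/andP: hp => hp0 hp1.
by apply: mulr_ge0; apply: exprn_ge0; rewrite ?subr_ge0.
Qed.

Lemma gnp_bound0 :
  1 - (n%:R ^+ 5 * p ^+ 4) <= gnp_prob n p (fun G => reconstructible G 2) <= 1.
Proof.
have tot : \sum_(E : {set 'I_n * 'I_n} | E \subset N) w E = 1.
  have := sub_sum _ (finset.sub0set N); rewrite finset.cards0 expr0 => <-.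
  by apply: eq_bigl => E; rewrite finset.sub0set andbT.
move: tot; rewrite (bigID (fun E : {set 'I_n * 'I_n} => `[< reconstructible (graph_of E) 2 >])) /=.
rewrite /gnp_prob -/N.
set A := \sum_(E | _) _; set B := \sum_(E | _) _ => tot.
have -> : A = 1 - B by rewrite -tot addrK.
have B0 : 0 <= B by apply: sumr_ge0 => E _; exact: w_ge0.
suff HB : B <= n%:R ^+ 5 * p ^+ 4.
  by rewrite lerD2l lerN2 HB /= lerBlDr lerDl.
rewrite /B big_mkcondr /=.
pose M := \sum_(E : {set 'I_n * 'I_n} | E \subset N) \sum_(t : T5) (if ut t && (St t \subset E) then w E else 0).
apply: (le_trans (y := M)).
  apply: ler_sum => E EN; case: ifP => [Hbad|_]; last first.
    by apply: sumr_ge0 => t _; case: ifP => // _; exact: w_ge0.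
  case: (boolP [exists t, ut t && (St t \subset E)]) => [/existsP[t Ht] | Hn].
    rewrite (bigD1 t) //= Ht lerDl; apply: sumr_ge0 => t' _.
    by case: ifP => // _; exact: w_ge0.
  have := recon_P5 (simple_graph_of _ EN) (good _ EN Hn).
  by move/asboolP: Hbad.
rewrite /M exchange_big /=.
apply: (le_trans (y := \sum_(t : T5) p ^+ 4)).
  apply: ler_sum => t _; case: (boolP (ut t)) => Hut /=.
    by rewrite -big_mkcondr (sub_sum _ (St_N _ Hut)) // St_card.
  by rewrite big1 // exprn_ge0 //; case/andP: hp.
rewrite sumr_const !card_prod !card_ord -[X in X <= _]mulr_natl.
by rewrite !natrM !exprS !expr0 !mulr1 !mulrA.
Qed.

End Prob.

Import numFieldTopology.Exports.
Local Open Scope classical_set_scope.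
Local Open Scope ring_scope.

Theorem theorem1p5 (R : realType) (p : nat -> R) :
  (forall n, 0 <= p n <= 1) ->
  p n * (n%:R `^ (5 / 4 : R)) @[n --> \oo] --> (0 : R) ->
  gnp_prob n (p n) (fun G => reconstructible G 2) @[n --> \oo] --> (1 : R).
Proof.
move=> Hp Hq.
set q := fun n : nat => p n * (n%:R `^ (5 / 4 : R)).
have Eq : forall n, q n ^+ 4 = n%:R ^+ 5 * p n ^+ 4.
  move=> n; rewrite /q exprMn mulrC; congr (_ * _).
  rewrite -[LHS](@powR_mulrn _ _ 4) ?powR_ge0 // -powRrM -(@powR_mulrn _ _ 5) ?ler0n //.
  by congr (_ `^ _); rewrite -mulrA mulVf ?mulr1 // pnatr_eq0.
apply: (@squeeze_cvgr _ _ _ _ (fun n => 1 - q n ^+ 4) (fun=> 1)).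
- by apply: nearW => n; rewrite Eq; exact: gnp_bound0 (Hp n).
- rewrite -[X in _ --> X]subr0; apply: cvgB; first exact: cvg_cst.
  have H4 : (fun n => q n ^+ 4) = (q \* q) \* (q \* q).
    by apply/funext => n /=; rewrite !exprS expr0 mulr1 !mulrA.
  have Hq2 : (q \* q) @ \oo --> (0 * 0 : R) by apply: cvgM.
  have Hq4 : ((q \* q) \* (q \* q)) @ \oo --> ((0 * 0) * (0 * 0) : R) by apply: cvgM.
  by move: Hq4; rewrite !mulr0 -H4.
- exact: cvg_cst.
Qed.
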